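(* There do not exist primes $p, q$ and positive integers $x, y, z$ such that \[ x^3 - 1 = p^3 y^2 \quad \text{and} \quad x^3 + 1 = q^3 z^2 . \] Equivalently, there are no three consecutive powerful numbers of the form $x^3 - 1 = p^3 y^2$, $x^3$, $x^3 + 1 = q^3 z^2$ with $p, q$ prime and $x, y, z$ positive integers.
   Context: A positive integer $n$ is called powerful if $p^2 \mid n$ for every prime $p$ dividing $n$. *)

(* Defs.v *)
From mathcomp Require Import all_boot.

(* Main.v *)
Require Import Defs.
From mathcomp Require Import all_boot zify ring.
Set Warnings "-notation-overridden".

Definition P3 n := forall r, prime r -> r != 3 -> ~~ odd (logn r n).

Lemma logn_ndvd r n : ~~ (r %| n) -> logn r n = 0.
Proof. by move=> h; rewrite lognE (negbTE h) !andbF. Qed.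

Lemma even_sq nn : 0 < nn -> (forall r, prime r -> ~~ odd (logn r nn)) ->
  exists m, nn = m ^ 2.
Proof.
suff H : forall N n, n <= N -> 0 < n -> (forall r, prime r -> ~~ odd (logn r n)) -> exists m, n = m ^ 2.
  by move=> p0 hev; apply: (H nn).
elim=> [|N IH] n leN npos hev; first by move: leN npos; rewrite leqn0 => /eqP ->.
case: (ltnP 1 n) => n1; last first.
  by exists 1; apply/eqP; rewrite eqn_leq n1 npos.
case: (pdivP n1) => r pr rn.
case: (pfactor_coprime pr npos) => m cm nE.
have m0 : 0 < m by move: npos; rewrite nE muln_gt0 => /andP[].
have lr : 0 < logn r n by rewrite logn_gt0 mem_primes pr npos rn.
have hr := hev r pr.
have : exists k, logn r n = k.*2.
  by exists (logn r n)./2; rewrite -[in LHS](odd_double_half (logn r n)) (negbTE hr).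
case=> k kE.
have k0 : 0 < k by move: lr; rewrite kE double_gt0.
have rgt1 : 1 < r := prime_gt1 pr.
have mlt : m < n.
  rewrite nE -[X in X < _]muln1 ltn_pmul2l //.
  by rewrite kE -(exp1n k.*2) ltn_exp2r // double_gt0.
have [u uE] : exists u, m = u ^ 2.
  apply: (IH m) => //; first by rewrite -ltnS (leq_trans mlt).
  move=> q pq; have := hev q pq; rewrite [in X in logn _ X]nE lognM //.
  by rewrite lognX oddD oddM (negbTE hr) /= addbF.
exists (u * r ^ k); rewrite nE uE kE expnMn -!expnM; congr (_ * _); congr (_ ^ _).
by rewrite -muln2 mulnC.
Qed.

Lemma S3_of {n} : 0 < n -> P3 n -> exists m, n = m ^ 2 \/ n = 3 * m ^ 2.
Proof.
move=> n0 h.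
case o3: (odd (logn 3 n)).
  have [m mE] : exists m, 3 * n = m ^ 2.
    apply: even_sq; first by rewrite muln_gt0 n0.
    move=> r pr; rewrite lognM // (logn_prime _ (isT : prime 3)).
    case: (eqVneq r 3) => [->|r3] /=; first by rewrite o3.
    by rewrite add0n h.
  have : 3 %| m ^ 2 by rewrite -mE dvdn_mulr.
  rewrite Euclid_dvdX // andbT.
  case/dvdnP=> k kE; exists k; right.
  by apply/eqP; rewrite -(eqn_pmul2l (isT : 0 < 3)) mE kE; apply/eqP; ring.
have [m mE] : exists m, n = m ^ 2.
  apply: even_sq => // r pr; case: (eqVneq r 3) => [->|r3]; first by rewrite o3.
  exact: h.
by exists m; left.
Qed.

Lemma vpair {a b c y r} : 0 < a -> 0 < b -> prime r -> a * b = c * y ^ 2 ->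
  ~~ (r %| c) -> (~~ (r %| a) \/ ~~ (r %| b)) ->
  ~~ odd (logn r a) /\ ~~ odd (logn r b).
Proof.
move=> a0 b0 pr E rc hab.
have : 0 < c * y ^ 2 by rewrite -E muln_gt0 a0 b0.
rewrite muln_gt0 => /andP[c0 y0].
have := congr1 (logn r) E; rewrite lognM // lognM // lognX (logn_ndvd _ _ rc) add0n.
case: hab => h; rewrite (logn_ndvd _ _ h) ?addn0 ?add0n => ->; by rewrite oddM andFb.
Qed.

Lemma side_one {a b y p e} : prime p -> a * b = p ^ e * y ^ 2 -> 0 < a -> 0 < b ->
  (forall r, prime r -> r %| a -> r %| b -> r = 3) ->
  (p = 3 \/ ~~ (p %| a)) -> P3 a.
Proof.
move=> pp E a0 b0 com hp r pr r3.
case: (eqVneq r p) => [rp|rp].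
  subst r; case: hp => [h|h]; first by rewrite h eqxx in r3.
  by rewrite (logn_ndvd _ _ h).
have rc : ~~ (r %| p ^ e).
  by rewrite Euclid_dvdX // dvdn_prime2 // (negbTE rp).
have hab : ~~ (r %| a) \/ ~~ (r %| b).
  case ra: (r %| a); last by left.
  case rb: (r %| b); last by right.
  by move: (com r pr ra rb) r3 => ->.
by case: (vpair a0 b0 pr E rc hab).
Qed.

Lemma side {a b y p e} : prime p -> a * b = p ^ e * y ^ 2 -> 0 < a -> 0 < b ->
  (forall r, prime r -> r %| a -> r %| b -> r = 3) -> P3 a \/ P3 b.
Proof.
move=> pp E a0 b0 com.
case: (eqVneq p 3) => [p3|p3]; first by left; apply: (side_one pp E) => //; left.
case pa: (p %| a); last by left; apply: (side_one pp E) => //; right; rewrite pa.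
right; apply: (side_one (b := a) (y := y) (e := e) pp _ b0 a0).
- by rewrite mulnC.
- by move=> r pr rb ra; apply: com.
right; apply/negP => pb; move: (com p pp pa pb) => h; by rewrite h eqxx in p3.
Qed.

Lemma P3_div {a b} : 0 < a -> 0 < b -> P3 (a * b) -> P3 a -> P3 b.
Proof.
move=> a0 b0 h ha r pr r3; have := h r pr r3; rewrite lognM // oddD.
by rewrite (negbTE (ha r pr r3)).
Qed.

Lemma P3_3sq w : 0 < w -> P3 (3 * w ^ 2).
Proof.
move=> w0 r pr r3; rewrite lognM ?expn_gt0 ?w0 // lognX logn_prime //.
by rewrite (negbTE r3) add0n oddM andFb.
Qed.

Lemma nsq m k : m ^ 2 < k ^ 2 -> k ^ 2 < (m + 1) ^ 2 -> False.
Proof. by rewrite !ltn_exp2r //; lia. Qed.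

Lemma nodiff2 k m : k ^ 2 = m ^ 2 + 2 -> False.
Proof.
move=> E.
case: (leqP k m) => h.
  have : k ^ 2 <= m ^ 2 by rewrite leq_exp2r.
  lia.
have : (m + 1) ^ 2 <= k ^ 2 by rewrite leq_exp2r // addn1.
case: m E h => [|m] E h.
  case: k E h => [|[|k]] //= E h; rewrite expnS expn1 in E; nia.
nia.
Qed.

Lemma sqmod3 m : m ^ 2 %% 3 != 2.
Proof.
rewrite -modnXm; have : m %% 3 < 3 by rewrite ltn_mod.
by case: (m %% 3) => [|[|[|]]].
Qed.

Lemma size1 t w u : 1 <= t -> (t + 1) ^ 2 + 2 = 3 * w ^ 2 ->
  t ^ 2 + 3 * t + 3 = 3 * u ^ 2 -> False.
Proof.
move=> t1 E1 E2.
have wu : w < u.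
  rewrite ltnNge; apply/negP => h.
  have : u ^ 2 <= w ^ 2 by rewrite leq_exp2r.
  nia.
have : (w + 1) ^ 2 <= u ^ 2 by rewrite leq_exp2r // addn1.
nia.
Qed.

Lemma size2 t w u : (t + 1) ^ 2 + 2 = 3 * w ^ 2 ->
  t ^ 2 + t + 1 = 3 * u ^ 2 -> False.
Proof.
move=> E1 E2.
have wu : u < w.
  rewrite ltnNge; apply/negP => h.
  have : w ^ 2 <= u ^ 2 by rewrite leq_exp2r.
  nia.
have : (u + 1) ^ 2 <= w ^ 2 by rewrite leq_exp2r // addn1.
nia.
Qed.

Lemma comAB a r : prime r -> r %| a -> r %| a ^ 2 + 3 * a + 3 -> r = 3.
Proof.
move=> pr ra rb.
have : r %| 3.
  have E : a ^ 2 + 3 * a + 3 = a * (a + 3) + 3 by ring.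
  rewrite E in rb.
  by rewrite (dvdn_addr _ (dvdn_mulr _ ra)) in rb.
by rewrite dvdn_prime2 // => /eqP.
Qed.

Lemma comCD a r : prime r -> r %| a + 2 -> r %| a ^ 2 + a + 1 -> r = 3.
Proof.
move=> pr rc rd.
have h : r %| 3 * (a + 1).
  have E : (a + 2) * (a + 2) = 3 * (a + 1) + (a ^ 2 + a + 1) by ring.
  by rewrite -(dvdn_addl _ rd) -E dvdn_mulr.
rewrite Euclid_dvdM // in h; case/orP: h => h; first by move: h; rewrite dvdn_prime2 // => /eqP.
have : r %| 1.
  by rewrite -(dvdn_addr 1 h) -addnA.
by rewrite Euclid_dvd1.
Qed.

Lemma comD12 t r : prime r -> r %| t ^ 2 + 3 * t + 3 -> r %| t ^ 2 + t + 1 -> False.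
Proof.
move=> pr r1 r2.
have h : r %| 2 * (t + 1).
  have E : t ^ 2 + 3 * t + 3 = (t ^ 2 + t + 1) + 2 * (t + 1) by ring.
  by rewrite -(dvdn_addr _ r2) -E.
rewrite Euclid_dvdM // in h; case/orP: h => h.
  move: h; rewrite dvdn_prime2 // => /eqP r2e; subst r.
  move: r2; rewrite dvdn2.
  have E : t ^ 2 + t + 1 = t * (t + 1) + 1 by ring.
  by rewrite E oddD oddM addn1 /=; case: (odd t).
have E : t ^ 2 + t + 1 = t * (t + 1) + 1 by ring.
rewrite E in r2.
have : r %| 1 by rewrite -(dvdn_addr 1 (dvdn_mull t h)).

by rewrite Euclid_dvd1.
Qed.

Lemma S3_sqB {a m} : 0 < a -> a ^ 2 + 3 * a + 3 = m ^ 2 -> False.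
Proof.
move=> a0 E; apply: (nsq (a + 1) m); rewrite -E; nia.
Qed.

Lemma S3_sqD {a m} : 0 < a -> a ^ 2 + a + 1 = m ^ 2 -> False.
Proof.
move=> a0 E; apply: (nsq a m); rewrite -E; nia.
Qed.

Lemma dvd3B a : (3 %| a ^ 2 + 3 * a + 3) = (3 %| a).
Proof.
have -> : a ^ 2 + 3 * a + 3 = a * a + 3 * (a + 1) by ring.
by rewrite (dvdn_addl _ (dvdn_mulr _ (dvdnn 3))) Euclid_dvdM // orbb.
Qed.

Lemma dvd3D a : (3 %| a ^ 2 + a + 1) = (3 %| a + 2).
Proof.
have E : (a + 2) * (a + 2) = 3 * (a + 1) + (a ^ 2 + a + 1) by ring.
by rewrite -[3 %| a + 2]orbb -(Euclid_dvdM _ _ (isT : prime 3)) E (dvdn_addr _ (dvdn_mulr _ (dvdnn 3))).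
Qed.

Theorem theorem1 :
  ~ (exists p q x y z : nat,
       [/\ prime p, prime q, 0 < x, 0 < y & 0 < z] /\
       x ^ 3 - 1 = p ^ 3 * y ^ 2 /\ x ^ 3 + 1 = q ^ 3 * z ^ 2).
Proof.
move=> [p [q [x [y [z [[pp pq x0 y0 z0] [E1 E2]]]]]]].
have [a xE] : exists a, x = a + 1 by exists x.-1; lia.
subst x.
have {}E1 : a * (a ^ 2 + 3 * a + 3) = p ^ 3 * y ^ 2.
  have E : (a + 1) ^ 3 = a * (a ^ 2 + 3 * a + 3) + 1 by ring.
  by rewrite -E1 E addnK.
have {}E2 : (a + 2) * (a ^ 2 + a + 1) = q ^ 3 * z ^ 2.
  by rewrite -E2; ring.
have P8 : 8 <= p ^ 3 * y ^ 2.
  have : 2 ^ 3 <= p ^ 3 by rewrite leq_exp2r // prime_gt1.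
  have : 1 <= y ^ 2 by rewrite expn_gt0 y0.
  nia.
have a2 : 2 <= a.
  clear x0; case: a E1 {E2} => [|[|a]] E1 //; rewrite -E1 in P8; by [].
have a0 : 0 < a by lia.
have B0 : 0 < a ^ 2 + 3 * a + 3 by lia.
have C0 : 0 < a + 2 by lia.
have D0 : 0 < a ^ 2 + a + 1 by lia.
have comAB' : forall r, prime r -> r %| a -> r %| a ^ 2 + 3 * a + 3 -> r = 3.
  by move=> r; apply: comAB.
have comCD' : forall r, prime r -> r %| a + 2 -> r %| a ^ 2 + a + 1 -> r = 3.
  by move=> r; apply: comCD.
have sideM := side pp E1 a0 B0 comAB'.
have sideP := side pq E2 C0 D0 comCD'.
have asq : ~~ (3 %| a) -> exists s, a = s ^ 2.
  move=> n3a; case: sideM => h.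
    have [m [mE|mE]] := S3_of a0 h; first by exists m.
    by move: n3a; rewrite mE dvdn_mulr.
  have [m [mE|mE]] := S3_of B0 h; first by case: (S3_sqB a0 mE).
  by move: n3a; rewrite -dvd3B mE dvdn_mulr.
have [k [r [rlt aE]]] : exists k r, r < 3 /\ a = 3 * k + r.
  exists (a %/ 3), (a %% 3); split; first by rewrite ltn_mod.
  lia.
case: r rlt aE => [|[|[|//]]] _ aE.
-
  case: sideP => h.
    have [m [mE|mE]] := S3_of C0 h.
      by move: (sqmod3 m); rewrite -mE aE; apply/negP/negPn; lia.
    by move: (dvdn_mulr (m ^ 2) (dvdnn 3)); rewrite -mE aE; lia.
  have [m [mE|mE]] := S3_of D0 h; first by case: (S3_sqD a0 mE).
  by move: (dvdn_mulr (m ^ 2) (dvdnn 3)); rewrite -mE dvd3D aE; lia.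
-
  have [s sE] : exists s, a = s ^ 2 by apply: asq; rewrite aE; lia.
  have s0 : 0 < s by move: a0; rewrite sE expn_gt0 orbF.
  have [t tE] : exists t, s = t + 1 by exists s.-1; lia.
  have t1 : 1 <= t.
    case: t tE => // tE; move: a2; rewrite sE tE //.
  have D12 : a ^ 2 + a + 1 = (t ^ 2 + 3 * t + 3) * (t ^ 2 + t + 1).
    by rewrite sE tE; ring.
  have D10 : 0 < t ^ 2 + 3 * t + 3 by lia.
  have D20 : 0 < t ^ 2 + t + 1 by lia.
  have D2nsq : forall m, t ^ 2 + t + 1 = m ^ 2 -> False.
    by move=> m mE; exact: (S3_sqD (a := t) (m := m) t1 mE).
  have D1nsq : forall m, t ^ 2 + 3 * t + 3 = m ^ 2 -> False.
    by move=> m mE; apply: (nsq (t + 1) m); rewrite -mE; nia.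
  case: sideP => h.
  + have [w [wE|wE]] := S3_of C0 h.
      by apply: (nodiff2 w s); rewrite -wE -sE.
    have w0 : 0 < w by move: C0; rewrite wE muln_gt0 expn_gt0 orbF => /andP[].
    have E3 : (t ^ 2 + 3 * t + 3) * ((a + 2) * (t ^ 2 + t + 1)) = q ^ 3 * z ^ 2.
      by rewrite -E2 D12; ring.
    have com3 : forall r, prime r -> r %| t ^ 2 + 3 * t + 3 ->
        r %| (a + 2) * (t ^ 2 + t + 1) -> r = 3.
      move=> r pr r1; rewrite Euclid_dvdM // => /orP[rc|r2].
        by apply: (comCD' r pr rc); rewrite D12 dvdn_mulr.
      by case: (comD12 t r pr r1 r2).
    have CD20 : 0 < (a + 2) * (t ^ 2 + t + 1) by rewrite muln_gt0 C0 D20.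
    have [h1|h1] := side pq E3 D10 CD20 com3.
      have [u [uE|uE]] := S3_of D10 h1; first by case: (D1nsq u).
      by apply: (size1 t w u t1); rewrite -?uE // -tE -sE -wE.
    have h2 : P3 (t ^ 2 + t + 1).
      by apply: (P3_div C0 D20 h1); rewrite wE; apply: P3_3sq.
    have [u [uE|uE]] := S3_of D20 h2; first by case: (D2nsq u).
    by apply: (size2 t w u); rewrite -?uE // -tE -sE -wE.
  + have [w [wE|wE]] := S3_of D0 h; first by case: (S3_sqD a0 wE).
    have E3 : (t ^ 2 + 3 * t + 3) * (t ^ 2 + t + 1) = 3 ^ 1 * w ^ 2.
      by rewrite -D12 wE.
    have com3 : forall r, prime r -> r %| t ^ 2 + 3 * t + 3 ->
        r %| t ^ 2 + t + 1 -> r = 3.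
      by move=> r pr r1 r2; case: (comD12 t r pr r1 r2).
    have h1 : P3 (t ^ 2 + 3 * t + 3).
      by apply: (side_one (isT : prime 3) E3) => //; left.
    have h2 : P3 (t ^ 2 + t + 1).
      apply: (side_one (b := t ^ 2 + 3 * t + 3) (y := w) (e := 1) (isT : prime 3)) => //.
      - by rewrite mulnC.
      - by move=> r pr r2 r1; apply: com3.
      - by left.
    have [u [uE|uE]] := S3_of D10 h1; first by case: (D1nsq u).
    have [v [vE|vE]] := S3_of D20 h2; first by case: (D2nsq v).
    by case: (comD12 t 3 isT); rewrite ?uE ?vE dvdn_mulr.
-
  have [s sE] : exists s, a = s ^ 2 by apply: asq; rewrite aE; lia.
  case: sideP => h.
    have [m [mE|mE]] := S3_of C0 h.
      by apply: (nodiff2 m s); rewrite -mE -sE.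
    by move: (dvdn_mulr (m ^ 2) (dvdnn 3)); rewrite -mE aE; lia.
  have [m [mE|mE]] := S3_of D0 h; first by case: (S3_sqD a0 mE).
  by move: (dvdn_mulr (m ^ 2) (dvdnn 3)); rewrite -mE dvd3D aE; lia.
Qed.
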